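(* Let $\lambda>\frac16$. Then $\mu_\lambda$ is doubling: there exists $C_\lambda\ge1$ such that for every $x\in[0,1]$ and every $r>0$, $\mu_\lambda(B(x,2r))\le C_\lambda\,\mu_\lambda(B(x,r))$.
   Context: For $\lambda>\frac16$, $\gamma_\lambda$ is the unique real number $\ge1$ with $2\cdot3^{-\gamma_\lambda}+(6\lambda+1)6^{-\gamma_\lambda}+(6\lambda-1)6^{-\gamma_\lambda}=1$; $p_0=p_3=3^{-\gamma_\lambda}$, $p_1=(6\lambda+1)6^{-\gamma_\lambda}$, $p_2=(6\lambda-1)6^{-\gamma_\lambda}$; $S_0(x)=x/3$, $S_1(x)=x/6+1/3$, $S_2(x)=-x/6+2/3$, $S_3(x)=x/3+2/3$; $\mu_\lambda$ is the unique Borel probability measure on $[0,1]$ with $\mu_\lambda=\sum_{i=0}^3p_i\,\mu_\lambda\circ S_i^{-1}$. $B(x,r)$ is the open ball (interval) of center $x$ and radius $r$. *)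

(* Defs.v *)
From HB Require Import structures.
From mathcomp Require Import all_boot all_order all_algebra.
From mathcomp Require Import all_classical all_reals all_analysis.
Set Implicit Arguments. Unset Strict Implicit. Unset Printing Implicit Defensive.
Import Order.TTheory GRing.Theory Num.Theory.
Local Open Scope classical_set_scope.
Local Open Scope ring_scope.

Section Defs.
Variable R : realType.

Definition is_gamma (lam g : R) : Prop :=
  1 <= g /\
  2 * 3 `^ (- g) + (6 * lam + 1) * 6 `^ (- g) + (6 * lam - 1) * 6 `^ (- g) = 1.

Definition pw (lam g : R) (i : 'I_4) : R :=
  match val i with
  | 0%N => 3 `^ (- g)
  | 1%N => (6 * lam + 1) * 6 `^ (- g)
  | 2%N => (6 * lam - 1) * 6 `^ (- g)
  | _ => 3 `^ (- g)
  end.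

Definition Smap (i : 'I_4) (x : R) : R :=
  match val i with
  | 0%N => x / 3
  | 1%N => x / 6 + 1 / 3
  | 2%N => - x / 6 + 2 / 3
  | _ => x / 3 + 2 / 3
  end.

Definition oball (x r : R) : set R := [set y | x - r < y < x + r].

Definition is_mu_lambda (lam g : R) (mu : probability R R) : Prop :=
  mu `[0, 1]%classic = 1%E /\
  forall A : set R, measurable A ->
    mu A = (\sum_(i < 4) (pw lam g i)%:E * mu (Smap i @^-1` A))%E.
End Defs.

(* Main.v *)
Require Import Defs.
From HB Require Import structures.
From mathcomp Require Import all_boot all_order all_algebra.
From mathcomp Require Import all_classical all_reals all_analysis.
From mathcomp Require Import lra.
Import Order.TTheory GRing.Theory Num.Theory.
Local Open Scope classical_set_scope.
Local Open Scope ring_scope.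

Section S.
Variable R : realType.
Variables (lam g : R) (mu : probability R R).
Hypothesis hlam : 1 / 6 < lam.
Hypothesis hg : is_gamma lam g.
Hypothesis hmu : is_mu_lambda lam g mu.

Definition Sinv (i : 'I_4) (y : R) : R :=
  match val i with
  | 0%N => 3 * y
  | 1%N => 6 * y - 2
  | 2%N => 4 - 6 * y
  | _ => 3 * y - 2
  end.
Definition kf (i : 'I_4) : R :=
  match val i with
  | 0%N => 3 | 1%N => 6 | 2%N => 6 | _ => 3 end.

Lemma oball_itv (x r : R) : oball x r = [set` `]x - r, x + r[%R].
Proof. by apply/seteqP; split => y /=; rewrite in_itv. Qed.

Lemma mball (x r : R) : measurable (oball x r).
Proof. by rewrite oball_itv; exact: measurable_itv. Qed.

Lemma preim_ball i (x r : R) : 0 < r -> Smap i @^-1` oball x r = oball (Sinv i x) (kf i * r).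
Proof.
move=> r0; apply/seteqP; split => y; rewrite /oball /Smap /Sinv /kf /=;
case: i => [[|[|[|[|n]]]] ? ] //= /andP[h1 h2]; apply/andP; split; lra.
Qed.


Definition F (A : set R) : R := fine (mu A).

Lemma mu_fin (A : set R) : measurable A -> mu A = (F A)%:E.
Proof.
move=> mA; rewrite /F fineK // ge0_fin_numE ?measure_ge0 //.
exact: (le_lt_trans (probability_le1 mu mA) (ltry 1)).
Qed.

Lemma F_ge0 (A : set R) : 0 <= F A.
Proof. by rewrite /F fine_ge0 // measure_ge0. Qed.

Lemma F_le1 (A : set R) : measurable A -> F A <= 1.
Proof. by move=> mA; rewrite -lee_fin -mu_fin // probability_le1. Qed.

Lemma F_mono (A B : set R) : measurable A -> measurable B -> A `<=` B -> F A <= F B.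
Proof.
move=> mA mB AB; rewrite -lee_fin -!mu_fin //.
by apply: le_measure => //; rewrite inE.
Qed.

Lemma m01 : measurable (`[0, 1]%classic : set R).
Proof. exact: measurable_itv. Qed.

Lemma F01 : F `[0, 1]%classic = 1.
Proof. by rewrite /F (proj1 hmu). Qed.

Lemma F_big (A : set R) : measurable A -> `[0, 1]%classic `<=` A -> F A = 1.
Proof.
move=> mA sA; apply/le_anti; rewrite F_le1 //=.
by rewrite -F01; apply: F_mono => //; exact: m01.
Qed.

Lemma F_far (A : set R) : measurable A -> A `<=` ~` `[0, 1]%classic -> F A = 0.
Proof.
move=> mA sA; apply/le_anti; rewrite F_ge0 andbT.
have h : F (~` `[0, 1]%classic) = 0.
  by rewrite /F probability_setC ?m01 // (proj1 hmu) subee.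
rewrite -h; apply: F_mono => //; exact: measurableC m01.
Qed.


Definition p0 : R := 3 `^ (- g).
Definition p1 : R := (6 * lam + 1) * 6 `^ (- g).
Definition p2 : R := (6 * lam - 1) * 6 `^ (- g).

Lemma p0_gt0 : 0 < p0. Proof. exact: powR_gt0. Qed.
Lemma p1_gt0 : 0 < p1.
Proof. have := hlam => hl; apply: mulr_gt0; [lra | exact: powR_gt0]. Qed.
Lemma p2_gt0 : 0 < p2.
Proof. have := hlam => hl; apply: mulr_gt0; [lra | exact: powR_gt0]. Qed.
Lemma psum : 2 * p0 + p1 + p2 = 1.
Proof. move: hg; rewrite /is_gamma => -[_ h]; exact: h. Qed.
Lemma p0_le1 : p0 <= 1.
Proof. have := p1_gt0; have := p2_gt0; have := p0_gt0; have := psum; lra. Qed.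
Lemma p2_le1 : p2 <= 1.
Proof. have := p1_gt0; have := p2_gt0; have := p0_gt0; have := psum; lra. Qed.
Lemma p1_le1 : p1 <= 1.
Proof. have := p1_gt0; have := p2_gt0; have := p0_gt0; have := psum; lra. Qed.
Lemma p12 : p2 <= p1.
Proof. rewrite /p1 /p2; apply: ler_wpM2r; [exact: powR_ge0 | lra]. Qed.

Definition pm : R := p0 * p2.
Lemma pm_gt0 : 0 < pm. Proof. exact: mulr_gt0 p0_gt0 p2_gt0. Qed.
Lemma pm_le1 : pm <= 1.
Proof. have := p0_le1; have := p2_le1; have := p0_gt0; have := p2_gt0; rewrite /pm; nra. Qed.

Lemma pw_ge i : pm <= pw lam g i.
Proof.
have := p0_le1; have := p2_le1; have := p0_gt0; have := p2_gt0; have := p12.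
rewrite /pm /pw -/p0 -/p1 -/p2.
by case: i => [[|[|[|[|n]]]] ? ] //= *; nra.
Qed.

Lemma pw_ge0 i : 0 <= pw lam g i.
Proof. exact: le_trans (ltW pm_gt0) (pw_ge i). Qed.

Lemma inv_ball4 (x r : R) : 0 < r ->
  F (oball x r) = p0 * F (oball (3 * x) (3 * r)) + p1 * F (oball (6 * x - 2) (6 * r))
    + p2 * F (oball (4 - 6 * x) (6 * r)) + p0 * F (oball (3 * x - 2) (3 * r)).
Proof.
move=> r0; have := (proj2 hmu) _ (mball x r).
rewrite !big_ord_recr big_ord0 /=.
rewrite !preim_ball // !mu_fin; try exact: mball.
rewrite /= add0e /Sinv /kf /pw /=.
by move=> [->].
Qed.

Lemma one_term (x r : R) i : 0 < r ->
  pw lam g i * F (oball (Sinv i x) (kf i * r)) <= F (oball x r).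
Proof.
move=> r0; rewrite [X in _ <= X]inv_ball4 //.
have := p1_gt0; have := p2_gt0; have := p0_gt0.
have := F_ge0 (oball (3 * x) (3 * r)); have := F_ge0 (oball (6 * x - 2) (6 * r)).
have := F_ge0 (oball (4 - 6 * x) (6 * r)); have := F_ge0 (oball (3 * x - 2) (3 * r)).
rewrite /pw /Sinv /kf -/p0 -/p1 -/p2.
by case: i => [[|[|[|[|n]]]] ? ] //= *; nra.
Qed.

Lemma scale_ind (a : R) (P : R -> Prop) : 0 < a ->
  (forall r, a <= r -> P r) ->
  (forall r, 0 < r -> r < a -> (forall s, 2 * r <= s -> P s) -> P r) ->
  forall r, 0 < r -> P r.
Proof.
move=> a0 base step.
have H : forall n : nat, forall r, a / 2 ^+ n <= r -> P r.
  elim=> [|n IH] r.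
    by rewrite expr0 divr1; exact: base.
  move=> hr; have [ar|ar] := leP a r; first exact: base.
  have h2 : 0 < 2 ^+ n :> R by apply: exprn_gt0.
  have hr0 : 0 < r.
    by apply: lt_le_trans hr; apply: divr_gt0 => //; apply: exprn_gt0.
  apply: step => // s hs; apply: IH; apply: le_trans hs.
  move: hr; rewrite exprS invfM mulrA => hr.
  have e : a / 2 / 2 ^+ n = (a / 2 ^+ n) / 2 by rewrite mulrAC.
  rewrite e in hr; lra.

move=> r r0.
have hb := archi_boundP (ltW (divr_gt0 a0 r0)).
apply: (H (Num.bound (a / r))).
rewrite ler_pdivrMr ?exprn_gt0 // mulrC -ler_pdivrMr //.
apply: (le_trans (ltW hb)).
rewrite -natrX ler_nat; apply/ltnW/ltn_expl => //.
Qed.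

Lemma g_ge1 : 1 <= g. Proof. by case: hg. Qed.
Lemma g_ge0 : 0 <= g. Proof. by have := g_ge1; lra. Qed.

Lemma powR_mono (x y : R) : 0 <= x -> x <= y -> x `^ g <= y `^ g.
Proof.
move=> x0 xy; apply: (ge0_ler_powR g_ge0) => //; rewrite nnegrE //.
exact: le_trans xy.
Qed.

Lemma powR_ge1g (x : R) : 1 <= x -> 1 <= x `^ g.
Proof. by move=> x1; have := @powR_mono 1 x ler01 x1; rewrite powR1. Qed.

Lemma powR_le1g (x : R) : 0 <= x -> x <= 1 -> x `^ g <= 1.
Proof. by move=> x0 x1; have := @powR_mono x 1 x0 x1; rewrite powR1. Qed.

Lemma K3 (t : R) : 0 <= t -> p0 * (3 * t) `^ g = t `^ g.
Proof.
move=> t0; rewrite powRM // /p0 powRN mulrA mulVf ?mul1r //.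
Qed.

Lemma Fball_far (x r0 : R) : (x + r0 <= 0) \/ (1 <= x - r0) -> F (oball x r0) = 0.
Proof.
move=> h; apply: F_far; first exact: mball.
move=> y /= /andP[h1 h2]; rewrite in_itv /= => /andP[h3 h4].
by case: h; lra.
Qed.

Lemma UB0 (r : R) : 0 < r -> F (oball 0 r) <= (3 * r) `^ g.
Proof.
move: r; apply: (@scale_ind (1/3) (fun r => F (oball 0 r) <= (3 * r) `^ g)) => // [r' hr|r' r0 ra IH].
  apply: le_trans (F_le1 _ (mball _ _)) _; apply: powR_ge1g; lra.
rewrite inv_ball4 // !mulr0.
rewrite (Fball_far (0 - 2) (6 * r')); try lra.
rewrite (Fball_far (4 - 0)); try lra.
rewrite (Fball_far (0 - 2)); try lra.
rewrite !mulr0 !addr0.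
apply: le_trans (_ : p0 * (3 * (3 * r')) `^ g <= _); last by rewrite K3 //; lra.
apply: ler_wpM2l; first exact: ltW p0_gt0.
by apply: IH; lra.
Qed.

Lemma UB1 (r : R) : 0 < r -> F (oball 1 r) <= (3 * r) `^ g.
Proof.
move: r; apply: (@scale_ind (1/3) (fun r => F (oball 1 r) <= (3 * r) `^ g)) => // [r' hr|r' r0 ra IH].
  apply: le_trans (F_le1 _ (mball _ _)) _; apply: powR_ge1g; lra.
rewrite inv_ball4 // !mulr1 (Fball_far (3)); try lra.
rewrite (Fball_far (6 - 2)); try lra.
rewrite (Fball_far (4 - 6)); try lra.
rewrite !mulr0 !add0r.
have -> : 3 - 2 = 1 :> R by lra.
apply: le_trans (_ : p0 * (3 * (3 * r')) `^ g <= _); last by rewrite K3 //; lra.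
apply: ler_wpM2l; first exact: ltW p0_gt0.
by apply: IH; lra.
Qed.

Lemma Fb_ge0 (x r : R) : 0 <= F (oball x r).
Proof. exact: F_ge0. Qed.

Ltac fpos := repeat match goal with
  |- context [F (oball ?a ?b)] =>
      lazymatch goal with
      | _ : 0 <= F (oball a b) |- _ => fail
      | _ => have := Fb_ge0 a b; move=> ?
      end
  end.

Lemma ot_aux (x r : R) : 0 < r ->
  [/\ 0 <= p0 * F (oball (3 * x) (3 * r)), 0 <= p1 * F (oball (6 * x - 2) (6 * r)),
      0 <= p2 * F (oball (4 - 6 * x) (6 * r)) & 0 <= p0 * F (oball (3 * x - 2) (3 * r))].
Proof.
move=> r0; split; apply: mulr_ge0; (exact: Fb_ge0 || exact: ltW p0_gt0 ||
  exact: ltW p1_gt0 || exact: ltW p2_gt0).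
Qed.

Lemma ot0 (x r : R) : 0 < r -> p0 * F (oball (3 * x) (3 * r)) <= F (oball x r).
Proof. move=> r0; rewrite [X in _ <= X]inv_ball4 //; have [] := ot_aux x r r0; lra. Qed.
Lemma ot1 (x r : R) : 0 < r -> p1 * F (oball (6 * x - 2) (6 * r)) <= F (oball x r).
Proof. move=> r0; rewrite [X in _ <= X]inv_ball4 //; have [] := ot_aux x r r0; lra. Qed.
Lemma ot2 (x r : R) : 0 < r -> p2 * F (oball (4 - 6 * x) (6 * r)) <= F (oball x r).
Proof. move=> r0; rewrite [X in _ <= X]inv_ball4 //; have [] := ot_aux x r r0; lra. Qed.
Lemma ot3 (x r : R) : 0 < r -> p0 * F (oball (3 * x - 2) (3 * r)) <= F (oball x r).
Proof. move=> r0; rewrite [X in _ <= X]inv_ball4 //; have [] := ot_aux x r r0; lra. Qed.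

Lemma chain (p b A B : R) : pm <= p -> 0 <= b -> b <= A -> p * A <= B -> pm * b <= B.
Proof.
move=> h1 h2 h3 h4; apply: le_trans h4.
apply: le_trans (_ : p * b <= _); first exact: ler_wpM2r.
apply: ler_wpM2l => //; exact: le_trans (ltW pm_gt0) h1.
Qed.

Lemma Fball_mono (z a b : R) : a <= b -> F (oball z a) <= F (oball z b).
Proof.
move=> ab; apply: F_mono; try exact: mball.
move=> y /= /andP[h1 h2]; apply/andP; split; lra.
Qed.

Lemma Fball_big (z r : R) : z - r < 0 -> 1 < z + r -> F (oball z r) = 1.
Proof.
move=> h1 h2; apply: F_big; first exact: mball.
move=> y /=; rewrite in_itv /= => /andP[h3 h4]; apply/andP; split; lra.
Qed.

Lemma pm_p0 : pm <= p0.
Proof. by have := pw_ge (Ordinal (isT : (0 < 4)%N)). Qed.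
Lemma pm_p1 : pm <= p1.
Proof. by have := pw_ge (Ordinal (isT : (1 < 4)%N)). Qed.
Lemma pm_p2 : pm <= p2.
Proof. by have := pw_ge (Ordinal (isT : (2 < 4)%N)). Qed.

Lemma pos_half (r y : R) : 1/2 <= r -> 0 <= y <= 1 -> pm <= F (oball y r).
Proof.
move=> hr /andP[y0 y1]; have r0 : 0 < r by lra.
have := pm_p0; have := pm_p1.
have [hy|hy] := leP y (1/3).
  have := ot0 y r r0; rewrite Fball_big; lra.
have [hy2|hy2] := leP y (2/3).
  have := ot1 y r r0; rewrite Fball_big; lra.
have := ot3 y r r0; rewrite Fball_big; lra.
Qed.

Lemma pos_step (r b : R) : 0 < r -> 0 <= b ->
  (forall z, 0 <= z <= 1 -> b <= F (oball z (3 * r))) ->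
  forall y, 0 <= y <= 1 -> pm * b <= F (oball y r).
Proof.
move=> r0 b0 H y /andP[y0 y1].
have [hy|hy] := leP y (1/3).
  apply: chain pm_p0 b0 _ (ot0 y r r0); apply: H; apply/andP; split; lra.
have [hy2|hy2] := leP y (1/2).
  apply: chain pm_p1 b0 _ (ot1 y r r0).
  apply: le_trans (Fball_mono (6 * y - 2) (3 * r) (6 * r) ltac:(lra)).
  apply: H; apply/andP; split; lra.
have [hy3|hy3] := leP y (2/3).
  apply: chain pm_p2 b0 _ (ot2 y r r0).
  apply: le_trans (Fball_mono (4 - 6 * y) (3 * r) (6 * r) ltac:(lra)).
  apply: H; apply/andP; split; lra.
apply: chain pm_p0 b0 _ (ot3 y r r0); apply: H; apply/andP; split; lra.
Qed.

Definition k4 : R := pm * (pm * (pm * pm)).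
Definition k3 : R := pm * (pm * pm).

Lemma pos18 (y : R) : 0 <= y <= 1 -> k3 <= F (oball y (1/18)).
Proof.
have h1 : forall z, 0 <= z <= 1 -> pm <= F (oball z (3 * (1/6))).
  by move=> z hz; apply: pos_half => //; lra.
have h2 := pos_step (1/6) pm ltac:(lra) (ltW pm_gt0) h1.
have h2' : forall z, 0 <= z <= 1 -> pm * pm <= F (oball z (3 * (1/18))).
  move=> z hz; have -> : 3 * (1/18) = 1/6 :> R by lra.
  exact: h2.
have pm0 := ltW pm_gt0.
exact: (pos_step (1/18) (pm * pm) ltac:(lra) (mulr_ge0 pm0 pm0) h2').
Qed.

Lemma k3_gt0 : 0 < k3.
Proof. have h := pm_gt0; rewrite /k3; do 2 apply: mulr_gt0 =>//. Qed.
Lemma pos54 (y : R) : 0 <= y <= 1 -> k4 <= F (oball y (1/54)).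
Proof.
have h' : forall z, 0 <= z <= 1 -> k3 <= F (oball z (3 * (1/54))).
  move=> z hz; have -> : 3 * (1/54) = 1/18 :> R by lra.
  exact: pos18.
have pm0 := ltW pm_gt0.
exact: (pos_step (1/54) k3 ltac:(lra) (ltW k3_gt0) h').
Qed.

Lemma k4_gt0 : 0 < k4.
Proof. have h := pm_gt0; rewrite /k4; do 3 apply: mulr_gt0 =>//. Qed.
Lemma k4_le1 : k4 <= 1.
Proof.
have p0' := ltW pm_gt0.
have a := mulr_ile1 p0' p0' pm_le1 pm_le1.
have b := mulr_ile1 p0' (mulr_ge0 p0' p0') pm_le1 a.
exact: mulr_ile1 p0' (mulr_ge0 p0' (mulr_ge0 p0' p0')) pm_le1 b.
Qed.

Lemma LB0 (r : R) : 0 < r -> r <= 1/6 -> forall y, 0 <= y -> y <= 2 * r ->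
  k3 * r `^ g <= F (oball y r).
Proof.
move: r; apply: (@scale_ind (1/18) (fun r => r <= 1/6 -> forall y, 0 <= y -> y <= 2 * r ->
  k3 * r `^ g <= F (oball y r))) => // [r hr|r r0 ra IH] r6 y y0 yr.
  apply: (le_trans _ (Fball_mono y (1/18) r hr)).
  apply: (le_trans _ (pos18 y _)); last by apply/andP; split; lra.
  rewrite -[leRHS]mulr1; apply: ler_wpM2l; first exact: ltW k3_gt0.
  apply: powR_le1g; lra.
apply: (le_trans _ (ot0 y r r0)).
have := IH (3 * r) ltac:(lra) ltac:(lra) (3 * y) ltac:(lra) ltac:(lra).
move=> h; apply: le_trans (_ : p0 * (k3 * (3 * r) `^ g) <= _).
  by rewrite mulrCA K3 //; lra.
by apply: ler_wpM2l => //; exact: ltW p0_gt0.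
Qed.

Lemma LB1 (r : R) : 0 < r -> r <= 1/6 -> forall y, y <= 1 -> 1 - y <= 2 * r ->
  k3 * r `^ g <= F (oball y r).
Proof.
move: r; apply: (@scale_ind (1/18) (fun r => r <= 1/6 -> forall y, y <= 1 -> 1 - y <= 2 * r ->
  k3 * r `^ g <= F (oball y r))) => // [r hr|r r0 ra IH] r6 y y0 yr.
  apply: (le_trans _ (Fball_mono y (1/18) r hr)).
  apply: (le_trans _ (pos18 y _)); last by apply/andP; split; lra.
  rewrite -[leRHS]mulr1; apply: ler_wpM2l; first exact: ltW k3_gt0.
  apply: powR_le1g; lra.
apply: (le_trans _ (ot3 y r r0)).
have := IH (3 * r) ltac:(lra) ltac:(lra) (3 * y - 2) ltac:(lra) ltac:(lra).
move=> h; apply: le_trans (_ : p0 * (k3 * (3 * r) `^ g) <= _).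
  by rewrite mulrCA K3 //; lra.
by apply: ler_wpM2l => //; exact: ltW p0_gt0.
Qed.

Lemma bd (p z rho r : R) : 0 <= p <= 1 -> 0 < r -> 0 < rho -> rho <= 24 * r ->
  (z = 0 \/ z = 1 \/ z + rho <= 0 \/ 1 <= z - rho) ->
  p * F (oball z rho) <= (72 * r) `^ g.
Proof.
move=> /andP[p0' p1'] r0 rh0 rh h.
have hF : F (oball z rho) <= (72 * r) `^ g.
  have hm : (3 * rho) `^ g <= (72 * r) `^ g by apply: powR_mono; lra.
  case: h => [->|[->|h]].
  - exact: le_trans (UB0 rho rh0) hm.
  - exact: le_trans (UB1 rho rh0) hm.
  - by rewrite Fball_far //; exact: powR_ge0.
have := Fb_ge0 z rho.
move: hF; set a := F _; set b := _ `^ _ => hF ha.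
apply: le_trans hF; rewrite -[leRHS]mul1r; exact: ler_wpM2r.
Qed.

Ltac disj := first [ left; lra | right; lra | right; left; lra | right; right; left; lra | right; right; right; lra ].

Lemma p0I : 0 <= p0 <= 1. Proof. by rewrite p0_le1 ltW // p0_gt0. Qed.
Lemma p1I : 0 <= p1 <= 1. Proof. by rewrite p1_le1 ltW // p1_gt0. Qed.
Lemma p2I : 0 <= p2 <= 1. Proof. by rewrite p2_le1 ltW // p2_gt0. Qed.

Lemma upJ (c r : R) : 0 < r -> r <= 1/54 -> (c = 1/3 \/ c = 1/2 \/ c = 2/3) ->
  F (oball c (4 * r)) <= 4 * (72 * r) `^ g.
Proof.
move=> r0 r54 hc; rewrite inv_ball4; last lra.
have h0 := bd p0 (3 * c) (3 * (4 * r)) r p0I r0 ltac:(lra) ltac:(lra) ltac:(case: hc => [->|[->|->]]; disj).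
have h1 := bd p1 (6 * c - 2) (6 * (4 * r)) r p1I r0 ltac:(lra) ltac:(lra) ltac:(case: hc => [->|[->|->]]; disj).
have h2 := bd p2 (4 - 6 * c) (6 * (4 * r)) r p2I r0 ltac:(lra) ltac:(lra) ltac:(case: hc => [->|[->|->]]; disj).
have h3 := bd p0 (3 * c - 2) (3 * (4 * r)) r p0I r0 ltac:(lra) ltac:(lra) ltac:(case: hc => [->|[->|->]]; disj).
lra.
Qed.

Lemma lowJ (x y k p r : R) : 0 < r -> 1 <= k -> pm <= p ->
  p * F (oball y (k * r)) <= F (oball x r) ->
  k3 * (k * r) `^ g <= F (oball y (k * r)) ->
  k4 * r `^ g <= F (oball x r).
Proof.
move=> r0 k1 hp h1 h2; apply: le_trans h1.
have hk := k3_gt0; have hpm := pm_gt0.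
have hr : r `^ g <= (k * r) `^ g by apply: powR_mono; nra.
have hg0 := powR_ge0 r g.
rewrite /k4 -/k3 -mulrA.
apply: le_trans (_ : p * (k3 * (k * r) `^ g) <= _); last first.
  by apply: ler_wpM2l => //; lra.
apply: ler_pM => //; first lra; first by apply: mulr_ge0; lra.
by apply: ler_wpM2l; lra.
Qed.

Definition C0 : R := 4 * 72 `^ g / k4.

Lemma C0k4 : C0 * k4 = 4 * 72 `^ g.
Proof. by rewrite /C0 mulfVK // gt_eqF // k4_gt0. Qed.

Lemma C0_ge1 : 1 <= C0.
Proof.
have h := k4_gt0; have h1 := k4_le1; have h72 : 1 <= 72 `^ g by apply: powR_ge1g; lra.
rewrite /C0 ler_pdivlMr //; nra.
Qed.

Lemma junction (x c r : R) : 0 < r -> r <= 1/54 -> `|x - c| < 2 * r ->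
  (c = 1/3 \/ c = 1/2 \/ c = 2/3) -> 0 <= x <= 1 ->
  F (oball x (2 * r)) <= C0 * F (oball x r).
Proof.
move=> r0 r54 hxc hc /andP[x0 x1].
have hxc' : x - c < 2 * r /\ c - x < 2 * r.
  by move: hxc; rewrite ltr_norml; move=> /andP[]; split; lra.
have hsub : F (oball x (2 * r)) <= F (oball c (4 * r)).
  apply: F_mono; try exact: mball.
  move=> y /= /andP[h1 h2]; apply/andP; split; lra.
have hlow : k4 * r `^ g <= F (oball x r).
  case: hc => [hc|[hc|hc]]; subst c.
  - have [hx|hx] := leP x (1/3).
      apply: (lowJ x (3 * x) 3 p0 r) => //; try lra.
      + exact: pm_p0.
      + exact: ot0.
      + apply: LB1; lra.
    apply: (lowJ x (6 * x - 2) 6 p1 r) => //; try lra.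
    + exact: pm_p1.
    + exact: ot1.
    + apply: LB0; lra.
  - have [hx|hx] := leP x (1/2).
      apply: (lowJ x (6 * x - 2) 6 p1 r) => //; try lra.
      + exact: pm_p1.
      + exact: ot1.
      + apply: LB1; lra.
    apply: (lowJ x (4 - 6 * x) 6 p2 r) => //; try lra.
    + exact: pm_p2.
    + exact: ot2.
    + apply: LB1; lra.
  - have [hx|hx] := leP x (2/3).
      apply: (lowJ x (4 - 6 * x) 6 p2 r) => //; try lra.
      + exact: pm_p2.
      + exact: ot2.
      + apply: LB0; lra.
    apply: (lowJ x (3 * x - 2) 3 p0 r) => //; try lra.
    + exact: pm_p0.
    + exact: ot3.
    + apply: LB0; lra.
have hup := upJ c r r0 r54 hc.
apply: le_trans hsub _; apply: le_trans hup _.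
rewrite powRM; [|lra|lra].
apply: le_trans (_ : C0 * (k4 * r `^ g) <= _); last first.
  by apply: ler_wpM2l => //; have := C0_ge1; lra.
by rewrite [X in _ <= X]mulrA C0k4 mulrA.
Qed.

Lemma int0 (x r : R) : 0 < r -> x + 2 * r <= 1/3 ->
  F (oball x (2 * r)) = p0 * F (oball (3 * x) (3 * (2 * r))).
Proof.
move=> r0 h; rewrite inv_ball4; last lra.
rewrite (Fball_far (6 * x - 2) (6 * (2 * r))); last disj.
rewrite (Fball_far (4 - 6 * x) (6 * (2 * r))); last disj.
rewrite (Fball_far (3 * x - 2) (3 * (2 * r))); last disj.
by rewrite !mulr0 !addr0.
Qed.

Lemma int1 (x r : R) : 0 < r -> 1/3 <= x - 2 * r -> x + 2 * r <= 1/2 ->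
  F (oball x (2 * r)) = p1 * F (oball (6 * x - 2) (6 * (2 * r))).
Proof.
move=> r0 h h'; rewrite inv_ball4; last lra.
rewrite (Fball_far (3 * x) (3 * (2 * r))); last disj.
rewrite (Fball_far (4 - 6 * x) (6 * (2 * r))); last disj.
rewrite (Fball_far (3 * x - 2) (3 * (2 * r))); last disj.
by rewrite !mulr0 !addr0 add0r.
Qed.

Lemma int2 (x r : R) : 0 < r -> 1/2 <= x - 2 * r -> x + 2 * r <= 2/3 ->
  F (oball x (2 * r)) = p2 * F (oball (4 - 6 * x) (6 * (2 * r))).
Proof.
move=> r0 h h'; rewrite inv_ball4; last lra.
rewrite (Fball_far (3 * x) (3 * (2 * r))); last disj.
rewrite (Fball_far (6 * x - 2) (6 * (2 * r))); last disj.
rewrite (Fball_far (3 * x - 2) (3 * (2 * r))); last disj.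
by rewrite !mulr0 !addr0 !add0r.
Qed.

Lemma int3 (x r : R) : 0 < r -> 2/3 <= x - 2 * r ->
  F (oball x (2 * r)) = p0 * F (oball (3 * x - 2) (3 * (2 * r))).
Proof.
move=> r0 h; rewrite inv_ball4; last lra.
rewrite (Fball_far (3 * x) (3 * (2 * r))); last disj.
rewrite (Fball_far (6 * x - 2) (6 * (2 * r))); last disj.
rewrite (Fball_far (4 - 6 * x) (6 * (2 * r))); last disj.
by rewrite !mulr0 !add0r.
Qed.

Lemma int_step (x y p k r : R) : 0 <= p ->
  F (oball x (2 * r)) = p * F (oball y (k * (2 * r))) ->
  p * F (oball y (k * r)) <= F (oball x r) ->
  F (oball y (2 * (k * r))) <= C0 * F (oball y (k * r)) ->
  F (oball x (2 * r)) <= C0 * F (oball x r).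
Proof.
move=> p0' -> h1 h2.
have -> : k * (2 * r) = 2 * (k * r) by rewrite mulrCA.
apply: le_trans (_ : p * (C0 * F (oball y (k * r))) <= _).
  exact: ler_wpM2l.
rewrite mulrCA; apply: ler_wpM2l => //; have := C0_ge1; lra.
Qed.

Lemma main_real (r : R) : 0 < r -> forall x, 0 <= x <= 1 ->
  F (oball x (2 * r)) <= C0 * F (oball x r).
Proof.
move: r; apply: (@scale_ind (1/54) (fun r => forall x, 0 <= x <= 1 ->
  F (oball x (2 * r)) <= C0 * F (oball x r))) => // [r hr|r r0 ra IH] x hx.
  apply: le_trans (F_le1 _ (mball _ _)) _.
  have h1 := pos54 x hx; have h2 := Fball_mono x (1/54) r hr.
  have h72 : 1 <= 72 `^ g by apply: powR_ge1g; lra.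
  have hc := C0_ge1; have := C0k4.
  have : C0 * k4 <= C0 * F (oball x r).
    by apply: ler_wpM2l; lra.
  lra.
have [j|j] := ltP `|x - 1/3| (2 * r).
  by apply: (junction x (1/3) r) => //; lra.
have [j2|j2] := ltP `|x - 1/2| (2 * r).
  by apply: (junction x (1/2) r) => //; lra.
have [j3|j3] := ltP `|x - 2/3| (2 * r).
  by apply: (junction x (2/3) r) => //; lra.
move: j j2 j3; rewrite !ler_normr => /orP[j|j] /orP[j2|j2] /orP[j3|j3];
  case/andP: hx => x0 x1.
all: first [ (have hh : x + 2 * r <= 1/3 by lra);
             apply: (int_step x (3 * x) p0 3 r (ltW p0_gt0) (int0 x r r0 hh));
             [exact: ot0 | apply: IH; [lra | apply/andP; split; lra]]
           | (have hh1 : 1/3 <= x - 2 * r by lra); (have hh2 : x + 2 * r <= 1/2 by lra);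
             apply: (int_step x (6 * x - 2) p1 6 r (ltW p1_gt0) (int1 x r r0 hh1 hh2));
             [exact: ot1 | apply: IH; [lra | apply/andP; split; lra]]
           | (have hh1 : 1/2 <= x - 2 * r by lra); (have hh2 : x + 2 * r <= 2/3 by lra);
             apply: (int_step x (4 - 6 * x) p2 6 r (ltW p2_gt0) (int2 x r r0 hh1 hh2));
             [exact: ot2 | apply: IH; [lra | apply/andP; split; lra]]
           | (have hh : 2/3 <= x - 2 * r by lra);
             apply: (int_step x (3 * x - 2) p0 3 r (ltW p0_gt0) (int3 x r r0 hh));
             [exact: ot3 | apply: IH; [lra | apply/andP; split; lra]]
           | lra ].
Qed.

End S.

Theorem lemma4p1 (R : realType) (lam g : R) (mu : probability R R) :
  1 / 6 < lam ->
  is_gamma lam g ->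
  is_mu_lambda lam g mu ->
  exists C : R, 1 <= C /\
    forall x r : R, 0 <= x <= 1 -> 0 < r ->
      (mu (oball x (2 * r)) <= C%:E * mu (oball x r))%E.
Proof.
move=> hl hg hm.
exists (C0 R lam g); split.
  exact: (C0_ge1 R lam g hl hg).
move=> x r hx r0.
rewrite !(mu_fin R mu); try exact: mball.
rewrite -EFinM lee_fin.
exact: (main_real R lam g mu hl hg hm r r0 x hx).
Qed.
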